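(* Let $n>5$, let $G_R=(V,E_R)$ be an undirected (unweighted) connected graph of order $n$ such that $w^R_{xy}/w^R_{yx}\le c$ for every $(x,y)\in E_R$, and let $G_M=(V,E_M)$ be the clique of order $n$. If $r\ge 2c\left(1+\frac{2}{n-5}\right)$, then for every $S\subseteq V$ the absorption time $\tau$ of the two-graph Moran process with resident graph $G_R$ and mutant graph $G_M$ satisfies $$\mathbb{E}[\tau\mid X_0=S]\le\frac{r}{r-c}\,n\,(n-|S|).$$ In particular, $\mathbb{E}[\tau]\le\frac{r}{r-c}n^2$.
   Context: Two-graph Moran process: vertex set $V=\{1,\dots,n\}$; resident graph $G_R=(V,E_R)$ and mutant graph $G_M=(V,E_M)$ with row-stochastic weight matrices $W_R=[w^R_{ij}]$, $W_M=[w^M_{ij}]$ ($w^R_{ij}>0$ iff $(i,j)\in E_R$, similarly for $M$). The state $X_t$ at time $t$ is the mutant set; residents have fitness $1$, mutants fitness $r>0$. Each step a vertex $i$ is chosen with probability proportional to fitness; if $i$ is a mutant, it picks $j$ with probability $w^M_{ij}$ and $j$ becomes a mutant; if a resident, it picks $j$ with probability $w^R_{ij}$ and $j$ becomes a resident. The absorption time is $\tau=\min\{t: X_t\in\{\emptyset,V\}\}$. In $\mathbb{E}[\tau]$ (without conditioning), $X_0$ is a single mutant at a uniformly random vertex. Undirected graphs are unweighted: $w_{xy}=1/\deg(x)$ for neighbours $y$ of $x$, so $w^R_{xy}/w^R_{yx}=\deg(y)/\deg(x)$; for the clique $w^M_{xy}=1/(n-1)$. *)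

(* Defs.v *)
From HB Require Import structures.
From mathcomp Require Import all_boot all_order all_algebra.
From mathcomp Require Import all_classical all_reals all_analysis.
Set Implicit Arguments. Unset Strict Implicit. Unset Printing Implicit Defensive.
Import Order.TTheory GRing.Theory Num.Theory.
Local Open Scope ring_scope.

Section TwoGraphMoran.
Variables (R : realType) (n : nat).
Implicit Types (e : rel 'I_n) (S T : {set 'I_n}).

Definition undirected e := symmetric e /\ irreflexive e.
Definition connected_graph e := forall x y : 'I_n, connect e x y.

Definition deg e (x : 'I_n) : nat := #|[set y | e x y]|.

(* Unweighted undirected graph: w_xy = 1/deg(x) for neighbours y of x. *)
Definition wgraph e (x y : 'I_n) : R :=
  if e x y then (deg e x)%:R^-1 else 0.

Definition wclique (x y : 'I_n) : R :=
  if x != y then (n.-1)%:R^-1 else 0.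

Definition total_fitness (r : R) S : R := r * #|S|%:R + (n - #|S|)%:R.

Definition moran_step (WR WM : 'I_n -> 'I_n -> R) (r : R) S T : R :=
  \sum_(i : 'I_n) \sum_(j : 'I_n)
     (if i \in S then
        (r / total_fitness r S) * WM i j * (T == j |: S)%:R
      else
        (total_fitness r S)^-1 * WR i j * (T == S :\ j)%:R).

Fixpoint moran_dist (WR WM : 'I_n -> 'I_n -> R) (r : R) (S0 : {set 'I_n})
    (t : nat) (T : {set 'I_n}) : R :=
  match t with
  | 0 => (T == S0)%:R
  | t'.+1 => \sum_(S : {set 'I_n}) moran_dist WR WM r S0 t' S * moran_step WR WM r S T
  end.

Definition absorbing S : bool := (S == finset.set0) || (S == [set: 'I_n]).

(* P(tau > t | X_0 = S0) = P(X_t not in {emptyset, V}) (absorbing states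
   are never left). *)
Definition tail_prob WR WM r S0 t : R :=
  \sum_(T : {set 'I_n} | ~~ absorbing T) moran_dist WR WM r S0 t T.

(* E[tau | X_0 = S0] = sum_{t >= 0} P(tau > t), in the extended reals. *)
Definition exp_absorption WR WM r S0 : \bar R :=
  (\sum_(0 <= t <oo) (tail_prob WR WM r S0 t)%:E)%E.

(* E[tau] with X_0 a single mutant at a uniformly random vertex. *)
Definition exp_absorption_uniform WR WM r : \bar R :=
  (\sum_(v : 'I_n) ((n%:R)^-1)%:E * exp_absorption WR WM r [set v])%E.

End TwoGraphMoran.

(* Main.v *)
Require Import Defs.
From HB Require Import structures.
From mathcomp Require Import all_boot all_order all_algebra.
From mathcomp Require Import all_classical all_reals all_analysis.
From mathcomp Require Import ring lra.
Import Order.TTheory GRing.Theory Num.Theory.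
Local Open Scope ring_scope.

Lemma series_le (R : realType) (u : nat -> R) (B : R) :
  (forall t, 0 <= u t) -> (forall N, \sum_(0 <= t < N) u t <= B) ->
  (\sum_(0 <= t <oo) (u t)%:E <= B%:E)%E.
Proof.
move=> u0 hB.
have h0 : forall n, (0 <= n)%N -> true -> (0 <= (u n)%:E)%E.
  by move=> n _ _; rewrite lee_fin.
apply: lime_le; [exact: is_cvg_nneseries h0|]; apply: nearW => k /=.

by rewrite sumEFin lee_fin.
Qed.

Lemma sum_ind_mul (R : realType) (n : nat) (X : {set 'I_n}) (g : {set 'I_n} -> R) (a : R) :
  \sum_(T : {set 'I_n}) a * (T == X)%:R * g T = a * g X.
Proof.
rewrite (bigD1 X) //= eqxx big1 ?addr0 ?mulr1 // => T /negbTE ->.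
by rewrite mulr0 mul0r.
Qed.

Lemma step_sum (R : realType) (n : nat) WR WM (r : R) (S : {set 'I_n}) (g : {set 'I_n} -> R) :
  \sum_(T : {set 'I_n}) moran_step WR WM r S T * g T =
  \sum_(i : 'I_n) \sum_(j : 'I_n)
     (if i \in S then (r / total_fitness r S) * WM i j * g (j |: S)
      else (total_fitness r S)^-1 * WR i j * g (S :\ j)).
Proof.
rewrite /moran_step.
under eq_bigr => T _ do rewrite mulr_suml.
rewrite exchange_big; apply: eq_bigr => i _.
under eq_bigr => T _ do rewrite mulr_suml.
rewrite exchange_big; apply: eq_bigr => j _.
by case: (i \in S); rewrite sum_ind_mul.
Qed.

Lemma key_ineq (R : realType) (U V r c : R) :
  1 <= U -> U <= V -> 0 <= c -> 0 <= r ->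
  2 * c * (U + V - 1) <= r * (U + V - 2) ->
  (U + V - 1) * (c * U + r - c) <= r * U * V.
Proof.
move=> hU hUV hc hr h.
have E : r * U * V - (U + V - 1) * (c * U + r - c) =
         (U - 1) * (r * (V - 1) - c * (U + V - 1)) by ring.
have h2 : c * (U + V - 1) <= r * (V - 1) by nra.
have : 0 <= (U - 1) * (r * (V - 1) - c * (U + V - 1)).
  apply: mulr_ge0; lra.
lra.
Qed.

Lemma sum_ind_r (R : realType) (n : nat) (x : 'I_n -> R) (P : pred 'I_n) :
  \sum_(j : 'I_n) x j * (P j)%:R = \sum_(j | P j) x j.
Proof.
rewrite [RHS]big_mkcond; apply: eq_bigr => j _.
by case: (P j); rewrite ?mulr1 ?mulr0.
Qed.

Lemma clique_row (R : realType) (n : nat) (i : 'I_n) :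
  (1 < n)%N -> \sum_(j : 'I_n) @wclique R n i j = 1.
Proof.
move=> hn; rewrite /wclique.
rewrite -big_mkcond /= sumr_const.
have -> : #|[pred j : 'I_n | i != j]| = n.-1.
  have := cardC1 i; rewrite card_ord => <-; apply: eq_card => j.
  by rewrite !inE eq_sym.
rewrite -[LHS]mulr_natr mulVf // pnatr_eq0 -lt0n.
by case: n hn i => [|[|m]].
Qed.

Lemma clique_cut (R : realType) (n : nat) (S : {set 'I_n}) (i : 'I_n) :
  i \in S -> \sum_(j in ~: S) @wclique R n i j = #|~: S|%:R * (n.-1)%:R^-1.
Proof.
move=> iS; rewrite mulr_natl -sumr_const.
apply: eq_bigr => j; rewrite inE => jS; rewrite /wclique.
by have -> : i != j by apply/eqP => ij; rewrite -ij iS in jS.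
Qed.

Lemma sum_if (R : realType) (n : nat) (S : {set 'I_n}) (f g : 'I_n -> R) :
  \sum_(i : 'I_n) (if i \in S then f i else g i) =
  \sum_(i in S) f i + \sum_(i in ~: S) g i.
Proof.
rewrite (bigID (fun i => i \in S)) /=; congr (_ + _).
  by apply: eq_bigr => i ->.
apply: eq_big => [i|i]; first by rewrite inE.
by move/negbTE ->.
Qed.

Lemma final_arith (R : realType) (u v r c D F A2 A3 K M : R) :
  1 <= u -> 1 <= v -> 1 <= r -> c < r -> 0 <= c ->
  F = r * u + v -> M = u + v - 1 ->
  K * (r - c) = r * (u + v) ->
  F * A2 * M = r * u * v -> F * A3 = D ->
  M * (D + r - c) <= r * u * v ->
  1 <= K * (A2 - A3).
Proof.
move=> hu hv hr hcr hc hF hM hK h2 h3 hkey.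
have Fpos : 0 < F by nra.
have Mpos : 0 < M by lra.
have h4 : M * (F * (A2 - A3)) = r * u * v - D * M.
  by rewrite -h2 -h3; ring.
have h5 : r - c <= F * (A2 - A3).
  have : M * (r - c) <= M * (F * (A2 - A3)) by rewrite h4; nra.
  by rewrite ler_pM2l.
have Kpos : 0 < K.
  have : 0 < K * (r - c) by rewrite hK; nra.
  by rewrite pmulr_lgt0 // subr_gt0.
have h6 : K * (r - c) <= K * (F * (A2 - A3)) by rewrite ler_pM2l.
have h7 : F <= F * (K * (A2 - A3)).
  have -> : F * (K * (A2 - A3)) = K * (F * (A2 - A3)) by ring.
  have hFle : F <= r * (u + v) by nra.
  lra.
by rewrite -(ler_pM2l Fpos) mulr1.
Qed.

Lemma sub_sum_le (R : realType) (n : nat) (S : {set 'I_n}) (x : 'I_n -> R) :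
  (forall j, 0 <= x j) -> \sum_(j in S) x j <= \sum_j x j.
Proof.
move=> x0; rewrite [leRHS](bigID (fun j => j \in S)) /= lerDl.
by apply: sumr_ge0 => j _; exact: x0.
Qed.

Lemma drift (R : realType) (n : nat) (WR : 'I_n -> 'I_n -> R) (r c : R)
    (S : {set 'I_n}) :
  (1 < n)%N -> 1 <= c -> c < r -> 1 <= r ->
  2 * c * (n%:R - 1) <= r * (n%:R - 2) ->
  (forall i j, 0 <= WR i j) -> (forall i, \sum_j WR i j <= 1) ->
  (forall S : {set 'I_n}, \sum_(i in ~: S) \sum_(j in S) WR i j <= c * #|S|%:R) ->
  \sum_(T : {set 'I_n}) moran_step WR (@wclique R n) r S T
        * (r * n%:R / (r - c) * (n%:R - #|T|%:R))
    <= r * n%:R / (r - c) * (n%:R - #|S|%:R) - (~~ absorbing S)%:R.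
Proof.
move=> hn hc hcr hr hrc WR0 WR1 hcut.
set K := r * n%:R / (r - c).
rewrite step_sum.
have hnS : n = (#|S| + #|~: S|)%N by rewrite cardsC card_ord.
set u := (#|S|%:R : R); set v := (#|~: S|%:R : R).
have hN : n%:R = u + v :> R by rewrite {1}hnS natrD.
set F := total_fitness r S.
have hF : F = r * u + v.
  have hsub : (n - #|S|)%N = #|~: S|.
    by rewrite -[n in (n - _)%N](card_ord n) -(cardsC S) addKn.
  by rewrite /F /total_fitness hsub.
have u0 : 0 <= u by rewrite ler0n.
have v0 : 0 <= v by rewrite ler0n.
have Fpos : 0 < F.
  rewrite hF; have : 0 < u + v by rewrite -hN ltr0n; exact: ltn_trans hn.
  nra.
set WM := @wclique R n.
pose c1 i j := if i \in S then r / F * WM i j else F^-1 * WR i j.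
pose up i j := if i \in S then r / F * WM i j * (j \notin S)%:R else 0.
pose dn i j := if i \in S then 0 else F^-1 * WR i j * (j \in S)%:R.
have E : forall i j,
   (if i \in S then r / F * WM i j * (K * (n%:R - #|j |: S|%:R))
    else F^-1 * WR i j * (K * (n%:R - #|S :\ j|%:R)))
   = K * v * c1 i j - K * up i j + K * dn i j.
  move=> i j; rewrite /c1 /up /dn hN.
  case: (i \in S).
    rewrite cardsU1 natrD -/u; case: (j \in S) => /=; ring.
  have := cardsD1 j S; rewrite -/u => hD.
  have -> : #|S :\ j|%:R = u - (j \in S)%:R :> R.
    by rewrite /u hD natrD addrAC subrr add0r.
  ring.
under eq_bigr => i _ do under eq_bigr => j _ do rewrite E.
pose A1 := \sum_i \sum_j c1 i j.
pose A2 := \sum_i \sum_j up i j.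
pose A3 := \sum_i \sum_j dn i j.
have -> : \sum_i \sum_j (K * v * c1 i j - K * up i j + K * dn i j)
    = K * v * A1 - K * A2 + K * A3.
  rewrite /A1 /A2 /A3 !mulr_sumr -sumrB -big_split; apply: eq_bigr => i _.
  by rewrite !mulr_sumr -sumrB -big_split.
pose D := \sum_(i in ~: S) \sum_(j in S) WR i j.
set M := ((n.-1)%:R : R).
have hM : M = u + v - 1 by rewrite /M -subn1 natrB ?hN // ltnW.
have hA1 : A1 <= 1.
  apply: (@le_trans _ _ (\sum_i (if i \in S then r / F else F^-1))).
    apply: ler_sum => i _; rewrite /c1; case: (i \in S).
      by rewrite -mulr_sumr (@clique_row R n i hn) mulr1.
    rewrite -mulr_sumr -[leRHS]mulr1 ler_pM2l ?invr_gt0 //.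
  rewrite sum_if !sumr_const -[(r / F) *+ _]mulr_natl -[F^-1 *+ _]mulr_natl -/u -/v.
  have -> : u * (r / F) + v * F^-1 = (r * u + v) / F by ring.
  by rewrite -hF divff // gt_eqF.
have hA2 : A2 = u * (r / F * (v * M^-1)).
  rewrite /A2 (eq_bigr (fun i => if i \in S then r / F * (v * M^-1) else 0)).
    by rewrite -big_mkcond /= sumr_const -[(_ * _) *+ _]mulr_natl.
  move=> i _; rewrite /up; case iS: (i \in S) => //; last by rewrite big1.
  under eq_bigr => j _ do rewrite -mulrA.
  rewrite -mulr_sumr sum_ind_r.
  rewrite (eq_bigl (fun j => j \in ~: S)) ?clique_cut // => j.
  by rewrite inE.
have hA3 : A3 = F^-1 * D.
  rewrite /A3 /D mulr_sumr.
  rewrite (eq_bigr (fun i => if i \in S then 0 else F^-1 * \sum_(j in S) WR i j)).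
    by rewrite sum_if big1 // add0r.
  move=> i _; rewrite /dn; case iS: (i \in S); first by rewrite big1.
  under eq_bigr => j _ do rewrite -mulrA.
  by rewrite -mulr_sumr sum_ind_r.
have hDc : D <= c * u := hcut S.
have hD0 : 0 <= D by apply: sumr_ge0 => i _; apply: sumr_ge0 => j _.
have hDv : D <= v.
  apply: (@le_trans _ _ (\sum_(i in ~: S) 1)); last by rewrite sumr_const.
  apply: ler_sum => i _; exact: le_trans (@sub_sum_le R n S (WR i) (WR0 i)) (WR1 i).
have c0 : 0 <= c by lra.
have hrc0 : r - c != 0 by rewrite subr_eq0 gt_eqF.
have hK : K * (r - c) = r * (u + v) by rewrite /K hN; field.
have K0 : 0 <= K.
  by rewrite /K divr_ge0 ?subr_ge0 ?mulr_ge0 ?ler0n //; lra.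
have hKA1 : K * v * A1 <= K * v.
  by rewrite -[leRHS]mulr1 ler_wpM2l // mulr_ge0.
suff hsuff : (~~ absorbing S)%:R <= K * (A2 - A3).
  rewrite hN; lra.
have hA0 : (~~ absorbing S)%:R = 0 :> R -> A2 = 0 -> D = 0 ->
   (~~ absorbing S)%:R <= K * (A2 - A3).
  by move=> h1 h2 hD; rewrite h1 h2 hA3 hD mulr0 subrr mulr0.
case: (eqVneq #|S| 0%N) => hu.
  have hS0 : S = finset.set0 by apply: cards0_eq.
  apply: hA0 => //; first by rewrite /absorbing hS0 eqxx.
    by rewrite hA2 /u hu mul0r.
  by move: hDc; rewrite /u hu mulr0 => ?; lra.
case: (eqVneq #|~: S| 0%N) => hv.
  have hS0 : S = [set: 'I_n] by rewrite -(finset.setCK S) (cards0_eq hv) finset.setC0.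
  apply: hA0 => //; first by rewrite /absorbing hS0 eqxx orbT.
    by rewrite hA2 /v hv mul0r !mulr0.
  by move: hDv; rewrite /v hv => ?; lra.
have hu1 : 1 <= u by rewrite /u ler1n lt0n.
have hv1 : 1 <= v by rewrite /v ler1n lt0n.
have hna : (~~ absorbing S)%:R <= 1 :> R by case: (~~ absorbing S); rewrite ?ler01.
apply: le_trans hna _.
have hM0 : M != 0 by rewrite hM; apply/eqP; lra.
have Fn0 : F != 0 by rewrite gt_eqF.
have hrc' : 2 * c * (u + v - 1) <= r * (u + v - 2) by rewrite -hN.
apply: (@final_arith R u v r c D F A2 A3 K M) => //.
- by rewrite hA2; field; apply/andP; split.
- by rewrite hA3 mulrA divff // mul1r.
- have [huv|hvu] := lerP u v.
    have := @key_ineq R u v r c hu1 huv c0 (ltW (lt_le_trans ltr01 hr)) hrc'.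
    have : (u + v - 1) * (D + r - c) <= (u + v - 1) * (c * u + r - c).
      by apply: ler_wpM2l; lra.
    rewrite hM; lra.
  have hrc'' : 2 * c * (v + u - 1) <= r * (v + u - 2) by rewrite [v + u]addrC.
  have := @key_ineq R v u r c hv1 (ltW hvu) c0 (ltW (lt_le_trans ltr01 hr)) hrc''.
  have hcv : D <= c * v by nra.
  have : (u + v - 1) * (D + r - c) <= (u + v - 1) * (c * v + r - c).
    by apply: ler_wpM2l; lra.
  rewrite hM; nra.
Qed.
Lemma sum_ind_mul' (R : realType) (n : nat) (X : {set 'I_n}) (g : {set 'I_n} -> R) (a : R) :
  \sum_(T : {set 'I_n}) a * (T == X)%:R * g T = a * g X.
Proof.
rewrite (bigD1 X) //= eqxx big1 ?addr0 ?mulr1 // => T /negbTE ->.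
by rewrite mulr0 mul0r.
Qed.

Lemma dist_ge0 (R : realType) (n : nat) WR WM (r : R) (S0 : {set 'I_n}) :
  (forall S T, 0 <= moran_step WR WM r S T) ->
  forall t T, 0 <= moran_dist WR WM r S0 t T.
Proof.
move=> h0; elim=> [|t IH] T /=; first by rewrite ler0n.
by apply: sumr_ge0 => S _; apply: mulr_ge0.
Qed.

Lemma chain_bound (R : realType) (n : nat) WR WM (r : R) (phi : {set 'I_n} -> R)
    (S0 : {set 'I_n}) :
  (forall S T, 0 <= moran_step WR WM r S T) ->
  (forall S, 0 <= phi S) ->
  (forall S, \sum_(T : {set 'I_n}) moran_step WR WM r S T * phi T
               <= phi S - (~~ absorbing S)%:R) ->
  forall N, \sum_(0 <= t < N) tail_prob WR WM r S0 t <= phi S0.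
Proof.
move=> h0 phi0 hdr.
pose Phi t := \sum_(T : {set 'I_n}) moran_dist WR WM r S0 t T * phi T.
have hstep : forall t, Phi t.+1 <= Phi t - tail_prob WR WM r S0 t.
  move=> t; rewrite /Phi /tail_prob /=.
  under eq_bigr => T _ do rewrite mulr_suml.
  rewrite exchange_big /=.
  under eq_bigr => S _ do (under eq_bigr => T _ do rewrite -mulrA; rewrite -mulr_sumr).
  rewrite [X in _ - X]big_mkcond /= -sumrB.
  apply: ler_sum => S _.
  have := hdr S; have := @dist_ge0 R n WR WM r S0 h0 t S.
  case: (~~ absorbing S) => /= d0 hS.
    by have := ler_wpM2l d0 hS; rewrite mulrBr mulr1.
  by rewrite subr0 (ler_wpM2l d0) // -[phi S]subr0.
have hPhi0 : Phi 0%N = phi S0.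
  by rewrite /Phi /= -[RHS]mul1r -(@sum_ind_mul' R n S0 phi 1); apply: eq_bigr => T _; rewrite mul1r.
have hPhige0 : forall t, 0 <= Phi t.
  by move=> t; apply: sumr_ge0 => T _; apply: mulr_ge0 => //; exact: (@dist_ge0 R n WR WM r S0 h0).
suff : forall N, \sum_(0 <= t < N) tail_prob WR WM r S0 t + Phi N <= phi S0.
  by move=> h N; apply: le_trans (h N); rewrite lerDl.
elim=> [|N IH]; first by rewrite big_geq // add0r hPhi0.
rewrite big_nat_recr //=.
apply: le_trans IH; have := hstep N; lra.
Qed.

Lemma wgraph_ge0 (R : realType) (n : nat) (e : rel 'I_n) x y : 0 <= wgraph R e x y.
Proof. by rewrite /wgraph; case: (e x y); rewrite ?invr_ge0 ?ler0n. Qed.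

Lemma wgraph_row (R : realType) (n : nat) (e : rel 'I_n) x :
  \sum_j wgraph R e x j <= 1.
Proof.
rewrite /wgraph -big_mkcond /= sumr_const.
have -> : #|[pred j | e x j]| = deg e x by rewrite /deg cardsE.
case: (posnP (deg e x)) => [->|h]; first by rewrite mulr0n ler01.
by rewrite -[leLHS]mulr_natr mulVf // pnatr_eq0 -lt0n.
Qed.

Lemma deg_gt0 (n : nat) (e : rel 'I_n) x y : e x y -> (0 < deg e x)%N.
Proof. by move=> exy; apply/card_gt0P; exists y; rewrite inE. Qed.

Lemma wgraph_gt0 (R : realType) (n : nat) (e : rel 'I_n) x y :
  e x y -> 0 < wgraph R e x y.
Proof.
move=> exy; rewrite /wgraph exy invr_gt0 ltr0n.
exact: deg_gt0 exy.
Qed.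

Lemma wgraph_swap (R : realType) (n : nat) (e : rel 'I_n) (c : R) x y :
  undirected e -> 0 <= c ->
  (forall x y : 'I_n, e x y -> wgraph R e x y / wgraph R e y x <= c) ->
  wgraph R e x y <= c * wgraph R e y x.
Proof.
move=> [esym _] c0 hc.
case exy: (e x y).
  have eyx : e y x by rewrite esym.
  rewrite -ler_pdivrMr; [exact: hc | exact: (@wgraph_gt0 R n e _ _ eyx)].
have eyx : e y x = false by rewrite esym.
by rewrite /wgraph exy eyx mulr0.
Qed.

Lemma wgraph_cut (R : realType) (n : nat) (e : rel 'I_n) (c : R) (S : {set 'I_n}) :
  undirected e -> 0 <= c ->
  (forall x y : 'I_n, e x y -> wgraph R e x y / wgraph R e y x <= c) ->
  \sum_(i in ~: S) \sum_(j in S) wgraph R e i j <= c * #|S|%:R.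
Proof.
move=> ue c0 hc.
apply: (@le_trans _ _ (\sum_(i in ~: S) \sum_(j in S) (c * wgraph R e j i))).
  by apply: ler_sum => i _; apply: ler_sum => j _; exact: (@wgraph_swap R n e c i j ue c0 hc).
rewrite exchange_big /=.
apply: (@le_trans _ _ (\sum_(j in S) c)); last by rewrite sumr_const mulr_natr.
apply: ler_sum => j _; rewrite -mulr_sumr -[leRHS]mulr1 ler_wpM2l //.
apply: le_trans (@wgraph_row R n e j).
apply: sub_sum_le => i; exact: wgraph_ge0.
Qed.

Lemma c_ge1 (R : realType) (n : nat) (e : rel 'I_n) (c : R) :
  (1 < n)%N -> undirected e -> connected_graph e ->
  (forall x y : 'I_n, e x y -> wgraph R e x y / wgraph R e y x <= c) ->
  1 <= c.
Proof.
move=> hn [esym _] hconn hc.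
have h0 : (0 < n)%N by apply: ltn_trans hn.
pose x0 := Ordinal h0; pose x1 := Ordinal hn.
have [p hp hl] := connectP (hconn x0 x1).
case: p hp hl => [|z p] /=.
  by move=> _ /(congr1 val).
case/andP=> exz _ _.
have ezx : e z x0 by rewrite esym.
have a0 := @wgraph_gt0 R n e _ _ exz; have b0 := @wgraph_gt0 R n e _ _ ezx.
have h1 := hc _ _ exz; have h2 := hc _ _ ezx.
rewrite ler_pdivrMr // in h1; rewrite ler_pdivrMr // in h2.
set a := wgraph R e x0 z in a0 h1 h2; set b := wgraph R e z x0 in b0 h1 h2.
have : (a + b) * 1 <= (a + b) * c by nra.
by rewrite ler_pM2l //; lra.
Qed.

Lemma fit_gt0 (R : realType) (n : nat) (r : R) (S : {set 'I_n}) :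
  0 < r -> (0 < n)%N -> 0 < total_fitness r S.
Proof.
move=> hr hn; rewrite /total_fitness.
case: (posnP #|S|) => h; first by rewrite h subn0 mulr0 add0r ltr0n.
have := mulr_gt0 hr (ltr0Sn R (#|S|.-1)); rewrite prednK //.
have := ler0n R (n - #|S|); lra.
Qed.

Lemma step_ge0 (R : realType) (n : nat) WR WM (r : R) (S T : {set 'I_n}) :
  0 < r -> (0 < n)%N -> (forall i j, 0 <= WR i j) -> (forall i j, 0 <= WM i j) ->
  0 <= moran_step WR WM r S T.
Proof.
move=> hr hn h1 h2; have hF := @fit_gt0 R n r S hr hn.
apply: sumr_ge0 => i _; apply: sumr_ge0 => j _.
case: (i \in S); apply: mulr_ge0; rewrite ?ler0n //; apply: mulr_ge0 => //.
  by apply: divr_ge0; [exact: ltW | exact: ltW].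
by rewrite invr_ge0 ltW.
Qed.

Theorem theorem9 (R : realType) (n : nat) (e : rel 'I_n) (c r : R) :
  (5 < n)%N ->
  undirected e ->
  connected_graph e ->
  (forall x y : 'I_n, e x y -> wgraph R e x y / wgraph R e y x <= c) ->
  0 < r ->
  2 * c * (1 + 2 / (n - 5)%:R) <= r ->
  (forall S : {set 'I_n},
     (exp_absorption (wgraph R e) (@wclique R n) r S
        <= (r / (r - c) * n%:R * (n - #|S|)%:R)%:E)%E) /\
  (exp_absorption_uniform (wgraph R e) (@wclique R n) r
     <= (r / (r - c) * (n%:R ^+ 2))%:E)%E.
Proof.
move=> hn5 ue hconn hc hr hrr.
have hn1 : (1 < n)%N by apply: leq_trans hn5.
have hn0 : (0 < n)%N by apply: leq_trans hn5.
have c1 := @c_ge1 R n e c hn1 ue hconn hc.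
have c0 : 0 <= c by lra.
set N := (n%:R : R).
have hN6 : 6 <= N by rewrite /N (ler_nat R 6 n).
have hn5r : (n - 5)%:R = N - 5 :> R by rewrite natrB // ltnW.
rewrite hn5r in hrr.
have hN5 : 0 < N - 5 by lra.
have hr2c : 2 * c <= r.
  have t0 : 0 <= 2 / (N - 5) by rewrite divr_ge0 // ltW.
  nra.
have hr' : 2 * c * (N - 3) <= r * (N - 5).
  have := ler_wpM2r (ltW hN5) hrr.
  have -> : 2 * c * (1 + 2 / (N - 5)) * (N - 5) = 2 * c * (N - 3).
    by field; rewrite gt_eqF.
  by [].
have hrc : 2 * c * (N - 1) <= r * (N - 2) by lra.
have hcr : c < r by lra.
have hr1 : 1 <= r by lra.
have WM0 : forall i j, 0 <= @wclique R n i j.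
  by move=> i j; rewrite /wclique; case: (i != j); rewrite ?invr_ge0 ?ler0n.
have hstep0 : forall S T, 0 <= moran_step (wgraph R e) (@wclique R n) r S T.
  move=> S T; apply: step_ge0 => //; exact: wgraph_ge0.
have hdrift := @drift R n (wgraph R e) r c.
set K := r * N / (r - c).
have K0 : 0 <= K by rewrite /K divr_ge0 ?subr_ge0 ?mulr_ge0 ?ler0n //; lra.
have hcardS : forall S : {set 'I_n}, (#|S| <= n)%N.
  by move=> S; have := max_card (mem S); rewrite card_ord.
have part1 : forall S : {set 'I_n},
    (exp_absorption (wgraph R e) (@wclique R n) r S <= (K * (N - #|S|%:R))%:E)%E.
  move=> S; apply: series_le.
    move=> t; apply: sumr_ge0 => T _; exact: dist_ge0.
  apply: (@chain_bound R n _ _ r (fun S0 : {set 'I_n} => K * (N - #|S0|%:R)) S) => //.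
    move=> S'; apply: mulr_ge0 => //; rewrite subr_ge0 /N ler_nat; exact: hcardS.
  move=> S'; apply: hdrift => //.
  - move=> i j; exact: wgraph_ge0.
  - move=> i; exact: wgraph_row.
  - move=> S''; exact: wgraph_cut.
have hrc0 : r - c != 0 by rewrite subr_eq0 gt_eqF.
split.
  move=> S; apply: le_trans (part1 S) _; rewrite lee_fin.
  rewrite natrB ?hcardS // -/N /K.
  have -> : r * N / (r - c) * (N - #|S|%:R) = r / (r - c) * N * (N - #|S|%:R).
    by field.
  by [].
rewrite /exp_absorption_uniform.
apply: (@le_trans _ _ (\sum_(v : 'I_n) ((N^-1)%:E * (K * (N - 1))%:E))%E).
  apply: lee_sum => v _; apply: lee_wpmul2l; first by rewrite lee_fin invr_ge0 ler0n.
  by have := part1 [set v]; rewrite cards1.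
rewrite -EFinM sumEFin sumr_const card_ord lee_fin -[leLHS]mulr_natr -/N.
have NN0 : N != 0 by rewrite gt_eqF //; lra.
have -> : N^-1 * (K * (N - 1)) * N = K * (N - 1) by field.
have -> : r / (r - c) * N ^+ 2 = K * N by rewrite /K; field.
nra.
Qed.
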